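(* Let $G=(V,E)$ be a graph, $v\in V$, $d\ge 1$ an embedding dimension, $\alpha\in(0,1)$ the PageRank decay factor and $\epsilon>0$ the PPR precision. The algorithm $\textsc{InstantEmbedding}(v,G,d,\epsilon)$ (described in the context) has running time $O\!\left(d + \frac{1}{\alpha(1-\alpha)\epsilon}\right)$; in particular it is independent of the number of nodes $n$ and edges $m$ of $G$.
   Context: $G=(V,E)$ is an unweighted graph with $n=|V|$ nodes, $m=|E|$ edges, adjacency matrix $\mathbf{A}$ and diagonal degree matrix $\mathbf{D}$; $\deg(u)$ denotes the degree of $u$; the graph is accessed via adjacency-list queries and hash functions are evaluated in constant time. For a starting distribution $\mathbf{s}$ and decay factor $\alpha\in(0,1)$, the Personalized PageRank vector $\pi(\mathbf{s})$ is defined by $\pi(\mathbf{s}) = \alpha\mathbf{s} + (1-\alpha)\pi(\mathbf{s})^\top\mathbf{D}^{-1}\mathbf{A}$; $\pi_v=\pi(\mathbf{e}_v)$. $\mathrm{SparsePPR}(v,G,\epsilon)$ is the local push approximation of Andersen, Chung and Lang (2007): start with $p=\mathbf{0}$, residual $r=\mathbf{e}_v$; while there is a node $u$ with $r_u \ge \epsilon\deg(u)$, perform a push at $u$: $p_u \mathrel{+}= \alpha r_u$, distribute the remaining residual mass $(1-\alpha)r_u$ of $u$ (in the lazy variant, half kept at $u$ and half spread equally over the neighbors of $u$), and update $r$ accordingly; finally return the sparse vector $p$ listing its nonzero entries. Let $h_d:\mathbb{N}\to\{0,\dots,d-1\}$ and $h_{\mathrm{sgn}}:\mathbb{N}\to\{-1,1\}$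 be hash functions drawn from universal hash families. $\textsc{InstantEmbedding}(v,G,d,\epsilon)$: compute $\pi_v \leftarrow \mathrm{SparsePPR}(v,G,\epsilon)$; set $\mathbf{w}\leftarrow\mathbf{0}_d$; for each nonzero entry $r_j$ of $\pi_v$ (indexed by node $j$), do $\mathbf{w}_{h_d(j)} \mathrel{+}= h_{\mathrm{sgn}}(j)\cdot\max(\log(r_j n),0)$; return $\mathbf{w}$. *)

(* Defs.v *)
From HB Require Import structures.
From mathcomp Require Import all_boot all_order all_algebra.
From mathcomp Require Import reals exp.
Set Implicit Arguments. Unset Strict Implicit. Unset Printing Implicit Defensive.
Import Order.TTheory GRing.Theory Num.Theory.
Local Open Scope ring_scope.

Section PPR.
Variables (R : realType) (T : finType) (adj : rel T).

Definition deg (u : T) : nat := #|[set w | adj u w]|.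

(* State of the push algorithm: (p, r). *)
Definition state := ({ffun T -> R} * {ffun T -> R})%type.

Definition init_state (v : T) : state :=
  ([ffun _ => 0], [ffun w => (w == v)%:R]).

Definition pushable (eps : R) (s : state) (u : T) : bool :=
  eps * (deg u)%:R <= s.2 u.

Definition push (lazy : bool) (alpha : R) (u : T) (s : state) : state :=
  let ru := s.2 u in
  ([ffun w => s.1 w + (if w == u then alpha * ru else 0)],
   [ffun w => (if w == u then (if lazy then (1 - alpha) * ru / 2 else 0) else s.2 w)
              + (if adj u w then
                   (if lazy then (1 - alpha) * ru / (2 * (deg u)%:R)
                    else (1 - alpha) * ru / (deg u)%:R)
                 else 0)]).

(* Executing a (nondeterministically chosen) sequence of push nodes;
   None if some push in the sequence is not allowed. *)
Fixpoint run (lazy : bool) (alpha eps : R) (s : state) (us : seq T) : option state :=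
  match us with
  | [::] => Some s
  | u :: us' => if pushable eps s u then run lazy alpha eps (push lazy alpha u s) us'
                else None
  end.

(* The while loop has stopped: no node satisfies the push condition. *)
Definition complete (eps : R) (s : state) : Prop := forall u, ~~ pushable eps s u.

(* Cost model (unit-cost RAM, adjacency-list access, O(1) hashing):
   1 unit of initialisation, and 1 + deg(u) units for a push at u
   (update p_u, r_u, and the residual of each neighbour, including the
   O(1) bookkeeping of the queue of pushable nodes). *)
Definition sparse_ppr_cost (us : seq T) : nat := (1 + \sum_(u <- us) (1 + deg u))%N.

Definition support (p : {ffun T -> R}) : {set T} := [set j | p j != 0].

(* InstantEmbedding cost: SparsePPR, then d units to create w = 0_d, then
   O(1) per nonzero entry of pi_v (two hash evaluations, a log, an update). *)
Definition instant_embedding_cost (d : nat) (us : seq T) (p : {ffun T -> R}) : nat :=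
  (sparse_ppr_cost us + d + #|support p|)%N.

(* The output vector of InstantEmbedding (for documentation; the running
   time statement does not depend on it). *)
Definition instant_embedding_output (d : nat) (hd : T -> 'I_d) (hsgn : T -> bool)
    (p : {ffun T -> R}) : {ffun 'I_d -> R} :=
  [ffun i => \sum_(j in support p | hd j == i)
      (if hsgn j then 1 else -1) * Num.max (ln (p j * (#|T|)%:R)) 0].

End PPR.

(* Main.v *)
Require Import Defs.
From HB Require Import structures.
From mathcomp Require Import all_boot all_order all_algebra.
From mathcomp Require Import reals exp.
From mathcomp Require Import ring lra zify.
Import Order.TTheory GRing.Theory Num.Theory.
Local Open Scope ring_scope.

Lemma fin_ineq (R : realType) (a b c : R) :
  0 <= a -> a <= c -> 1 <= b -> 1 + (a + (a + (a + 0))) + b <= 4%:R * (b + c).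
Proof. move=> h0 h1 h2. lra. Qed.

Section Aux.
Variables (R : realType) (T : finType) (adj : rel T).
Hypothesis irr : irreflexive adj.
Hypothesis degP : forall u : T, (0 < deg adj u)%N.
Variables (lazy : bool) (alpha eps : R).
Hypothesis ha : 0 < alpha < 1.
Hypothesis he : 0 < eps.

Lemma sum_adj (u : T) (c : R) :
  \sum_w (if adj u w then c else 0) = c * (deg adj u)%:R.
Proof.
rewrite -big_mkcond /= (eq_bigl (fun w => w \in [set w | adj u w])); last first.
  by move=> w; rewrite inE.
by rewrite sumr_const mulr_natr.
Qed.

Lemma push_sum (u : T) (s : state R T) :
  \sum_w (push adj lazy alpha u s).2 w = \sum_w s.2 w - alpha * s.2 u.
Proof.
rewrite /push /=. under eq_bigr do rewrite ffunE.
rewrite big_split /= sum_adj.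
rewrite (bigD1 u) //= eqxx [in RHS](bigD1 u) //=.
rewrite (eq_bigr (fun w => s.2 w)); last by move=> w /negbTE ->.
have hd : (deg adj u)%:R != 0 :> R by rewrite pnatr_eq0 -lt0n.
case: lazy; field; exact: hd.
Qed.

Lemma push_ge0 (u : T) (s : state R T) :
  (forall w, 0 <= s.2 w) -> forall w, 0 <= (push adj lazy alpha u s).2 w.
Proof.
move=> h w; rewrite /push /= ffunE.
have h1 : 0 <= 1 - alpha by case/andP: ha => _ h'; rewrite subr_ge0 ltW.
have h2 : 0 <= (1 - alpha) * s.2 u by rewrite mulr_ge0.
apply: addr_ge0.
  case: (w == u) => //; case: lazy => //; rewrite divr_ge0 //.
case: (adj u w) => //; case: lazy; rewrite divr_ge0 // ?mulr_ge0 //.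
Qed.

Lemma push_supp (u : T) (s : state R T) :
  (#|Defs.support (push adj lazy alpha u s).1| <= #|Defs.support s.1|.+1)%N.
Proof.
apply: (leq_trans (subset_leq_card (_ : _ \subset u |: Defs.support s.1))).
  apply/subsetP => w; rewrite !inE ffunE.
  case: (eqVneq w u) => [->|hw] //.
  by rewrite addr0.
by rewrite cardsU1; case: (u \in _).
Qed.

Lemma run_inv (us : seq T) (s s' : state R T) :
  (forall w, 0 <= s.2 w) -> run adj lazy alpha eps s us = Some s' ->
  [/\ forall w, 0 <= s'.2 w,
      \sum_w s'.2 w + alpha * eps * (\sum_(u <- us) deg adj u)%N%:R <= \sum_w s.2 w
    & (#|Defs.support s'.1| <= #|Defs.support s.1| + size us)%N].
Proof.
elim: us s => [|u us IH] s h /=.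
  by case=> <-; rewrite big_nil mulr0 addr0 addn0.
case hp: (pushable adj eps s u) => //.
move=> hr; have [h1 h2 h3] := IH _ (@push_ge0 u s h) hr.
split => //.
  move: h2; rewrite push_sum big_cons natrD => h2.
  move: hp; rewrite /pushable => hp.
  case/andP: ha => a0 _.
  have : alpha * (eps * (deg adj u)%:R) <= alpha * s.2 u by rewrite ler_pM2l.
  lra.
by apply: (leq_trans h3); rewrite addnS -addSn leq_add2r push_supp.
Qed.

Lemma term (n : nat) (s : state R T) :
  (forall w, 0 <= s.2 w) -> \sum_w s.2 w < n%:R * (alpha * eps) ->
  exists us s', run adj lazy alpha eps s us = Some s' /\ complete adj eps s'.
Proof.
elim: n s => [|n IH] s h.
  rewrite mul0r => hlt; have : 0 <= \sum_w s.2 w by apply: sumr_ge0.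
  by rewrite leNgt hlt.
move=> hlt.
case: (boolP [exists u, pushable adj eps s u]) => [/existsP [u hu]|hn].
  have hlt' : \sum_w (push adj lazy alpha u s).2 w < n%:R * (alpha * eps).
    rewrite push_sum.
    move: hu hlt; rewrite /pushable -natr1 => hu hlt.
    have hd : 1 <= (deg adj u)%:R :> R by rewrite ler1n.
    case/andP: ha => a0 _.
    have : alpha * (eps * 1) <= alpha * s.2 u.
      rewrite ler_pM2l //; apply: le_trans hu; rewrite ler_pM2l //.
    nra.
  have [us [s' [h1 h2]]] := IH (push adj lazy alpha u s) (@push_ge0 u s h) hlt'.
  by exists (u :: us), s'; rewrite /= hu.
exists [::], s; split => // u; apply/negP => hu; move/negP: hn; apply.
by apply/existsP; exists u.
Qed.

End Aux.

Theorem theorem1 :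
  exists C : nat,
  forall (R : realType) (T : finType) (adj : rel T),
    symmetric adj -> irreflexive adj ->
    (forall u : T, (0 < deg adj u)%N) ->
  forall (v : T) (d : nat), (1 <= d)%N ->
  forall (alpha eps : R), 0 < alpha < 1 -> 0 < eps ->
  forall lazy : bool,
    (exists (us : seq T) (s : state R T),
        run adj lazy alpha eps (init_state R v) us = Some s /\ complete adj eps s) /\
    (forall (us : seq T) (s : state R T),
        run adj lazy alpha eps (init_state R v) us = Some s ->
        ((instant_embedding_cost adj d us s.1)%:R : R)
          <= C%:R * (d%:R + 1 / (alpha * (1 - alpha) * eps))).
Proof.
exists 4%N => R T adj _ irr degP v d hd alpha eps ha he lazy.
have h0 : forall w, 0 <= (init_state R v).2 w.
  by move=> w; rewrite /= ffunE ler0n.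
have hs1 : \sum_w (init_state R v).2 w = 1.
  rewrite /= (bigD1 v) //= ffunE eqxx big1 ?addr0 // => w /negbTE hw.
  by rewrite ffunE hw.
have [a0 a1] := andP ha.
have ae : 0 < alpha * eps by rewrite mulr_gt0.
split.
  apply: (@term R T adj degP lazy alpha eps ha he (Num.bound (1 / (alpha * eps)))) => //.
  rewrite hs1 -ltr_pdivrMr //.
  by apply: archi_boundP; rewrite divr_ge0 // ltW.
move=> us s hr.
have [h1 h2 h3] := @run_inv R T adj degP lazy alpha eps ha us _ _ h0 hr.
set D := (\sum_(u <- us) deg adj u)%N in h2.
have hsupp0 : #|Defs.support (init_state R v).1| = 0%N.
  apply/eqP; rewrite cards_eq0; apply/eqP/setP => w.
  by rewrite !inE /= ffunE eqxx.
rewrite hsupp0 add0n in h3.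
have hsz : (size us <= D)%N.
  rewrite /D; elim: us {hr h1 h2 h3 D} => [|u us IH]; first by rewrite big_nil.
  by rewrite big_cons /= -add1n; apply: leq_add.
have hcost : (instant_embedding_cost adj d us s.1 <= 1 + 3 * D + d)%N.
  rewrite /instant_embedding_cost /sparse_ppr_cost big_split /= sum1_size -/D.
  lia.
apply: (@le_trans _ _ ((1 + 3 * D + d)%N%:R)); first by rewrite ler_nat.
have -> : ((1 + 3 * D + d)%N%:R : R) = 1 + (D%:R + (D%:R + (D%:R + 0))) + d%:R.
  by rewrite !natrD.
have hsum : 0 <= \sum_w s.2 w by apply: sumr_ge0.
rewrite hs1 in h2.
have hD : alpha * eps * D%:R <= 1 by lra.
have hX : D%:R <= 1 / (alpha * (1 - alpha) * eps).
  rewrite ler_pdivlMr; last by rewrite !mulr_gt0 // subr_gt0.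
  have hD0 : 0 <= D%:R :> R by [].
  have : 0 <= alpha * eps * D%:R * alpha by rewrite !mulr_ge0 // ltW.
  have -> : D%:R * (alpha * (1 - alpha) * eps) = alpha * eps * D%:R - alpha * eps * D%:R * alpha by ring.
  lra.
have hd1 : 1 <= d%:R :> R by rewrite ler1n.
move: hX hd1; set X := 1 / _; move=> hX hd1.
exact: fin_ineq (ler0n _ _) hX hd1.
Qed.
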